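(* Consider the following random variables, all defined on a common probability space (one draw from a superpopulation): a binary decision (plan) variable $P\in\{0,1\}$; a binary treatment at time 2, $A_2\in\{0,1\}$; real-valued outcomes $Y_1, Y_2$ with finite expectations; and, for $p^*,a^*\in\{0,1\}$, potential outcomes $Y_1^{p=p^*}, Y_2^{p=p^*}$, $A_2^{p=p^*}$ (values had $P$ been set to $p^*$), $Y_2^{a_2=a^*}$ (value of $Y_2$ had $A_2$ been set to $a^*$), and $Y_2^{p=p^*,a_2=a^*}$ (value of $Y_2$ had $P$ been set to $p^*$ and $A_2^{p=p^*}$ been set to $a^*$). Suppose that: (i) $\Pr(A_2=a^* )>0$ for every $a^*\in\{0,1\}$; (ii) $A_2^{p=p^*}=p^*$ for every $p^*\in\{0,1\}$; (iii) $\mathbb{E}(Y_2^{p=0}-Y_1^{p=0}\mid P=1)=\mathbb{E}(Y_2^{p=0}-Y_1^{p=0}\mid P=0)$; (iv) for each $p^*\in\{0,1\}$: $Y_1^{p=p^*}=Y_1$, $Y_2^{p=p^*}=Y_2$ and $A_2^{p=p^*}=A_2$ on the event $\{P=p^*\}$; (v) $\mathbb{E}(Y_2^{p=p^*,a_2=a^*}\mid P=p')=\mathbb{E}(Y_2^{a_2=a^*}\mid P=p')$ for every $p^*,a^*,p'\in\{0,1\}$. Then \[\{\mathbb{E}(Y_2\mid A_2=1)-\mathbb{E}(Y_1\mid A_2=1)\}-\{\mathbb{E}(Y_2\mid A_2=0)-\mathbb{E}(Y_1\mid A_2=0)\}=ATT_{A_2}-\psi,\] where $ATT_{A_2}=\mathbb{E}(Y_2^{a_2=1}-Y_2^{a_2=0}\mid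 A_2=1)$ and $\psi=\mathbb{E}(Y_1^{p=1}\mid P=1)-\mathbb{E}(Y_1^{p=0}\mid P=1)$.
   Context: Difference-in-differences setting with two time points. Superscripts denote potential outcomes (counterfactual values under a hypothetical intervention fixing the indicated variable(s)); in the joint intervention $Y_2^{p=p^*,a_2=a^*}$, $P$ is set to $p^*$ and the treatment $A_2^{p=p^*}$ is then set to $a^*$. $P$ represents the decision/plan to implement a policy, $A_2$ its implementation at time 2 (no unit is treated at time 1), and $Y_1,Y_2$ the outcome measured at times 1 and 2. *)

(* Defs.v *)
From HB Require Import structures.
From mathcomp Require Import all_boot all_order all_algebra.
From mathcomp Require Import all_classical all_reals all_analysis.
Set Implicit Arguments. Unset Strict Implicit. Unset Printing Implicit Defensive.
Import Order.TTheory GRing.Theory Num.Theory.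
Local Open Scope classical_set_scope.
Local Open Scope ring_scope.

Definition condE d (T : measurableType d) (R : realType)
  (Pr : probability T R) (X : T -> R) (B : set T) : R :=
  fine (\int[Pr]_(w in B) (X w)%:E) / fine (Pr B).

Definition int_rv d (T : measurableType d) (R : realType)
  (Pr : probability T R) (X : T -> R) : Prop :=
  measurable_fun setT X /\ Pr.-integrable setT (EFin \o X).

(* Main.v *)
Require Import Defs.
From HB Require Import structures.
From mathcomp Require Import all_boot all_order all_algebra.
From mathcomp Require Import all_classical all_reals all_analysis.
From mathcomp Require Import lra.
Import Order.TTheory GRing.Theory Num.Theory.
Local Open Scope classical_set_scope.
Local Open Scope ring_scope.

Lemma condE_eqS d (T : measurableType d) (R : realType) (Pr : probability T R)
  (X Y : T -> R) (B : set T) :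
  (forall w, B w -> X w = Y w) -> condE Pr X B = condE Pr Y B.
Proof.
move=> h; rewrite /condE; congr (fine _ / _); apply: eq_integral => w.
by rewrite inE => /h ->.
Qed.

Lemma condEB d (T : measurableType d) (R : realType) (Pr : probability T R)
  (X Y : T -> R) (B : set T) : measurable B ->
  int_rv Pr X -> int_rv Pr Y ->
  condE Pr (fun w => X w - Y w) B = condE Pr X B - condE Pr Y B.
Proof.
move=> mB [_ iX] [_ iY].
have iX' := integrableS measurableT mB (@subsetT _ B) iX.
have iY' := integrableS measurableT mB (@subsetT _ B) iY.
rewrite /condE.
under eq_integral do rewrite EFinB.
rewrite integralB_EFin // fineB ?mulrBl //; exact: integrable_fin_num.
Qed.

Lemma arith4 (R : realType) (a b c e : R) : a - b - (c - e) = a - c - (b - e).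
Proof. lra. Qed.

(* Binary values 0/1 are encoded as false/true. *)
Theorem proposition1 (d : measure_display) (T : measurableType d) (R : realType)
  (Pr : probability T R)
  (P A2 : T -> bool) (Y1 Y2 : T -> R)
  (Y1p Y2p : bool -> T -> R) (A2p : bool -> T -> bool)
  (Y2a : bool -> T -> R) (Y2pa : bool -> bool -> T -> R) :
  (forall b, measurable [set w | P w = b]) ->
  (forall b, measurable [set w | A2 w = b]) ->
  int_rv Pr Y1 -> int_rv Pr Y2 ->
  (forall p, int_rv Pr (Y1p p)) -> (forall p, int_rv Pr (Y2p p)) ->
  (forall a, int_rv Pr (Y2a a)) -> (forall p a, int_rv Pr (Y2pa p a)) ->
  (* composition: setting A2^{p=p*} to its own (deterministic) value p* is no intervention *)
  (forall p w, Y2pa p p w = Y2p p w) ->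
  (* (i) *)
  (forall a, (0 < Pr [set w | A2 w = a])%E) ->
  (* (ii) *)
  (forall p w, A2p p w = p) ->
  (* (iii) *)
  condE Pr (fun w => Y2p false w - Y1p false w) [set w | P w = true] =
  condE Pr (fun w => Y2p false w - Y1p false w) [set w | P w = false] ->
  (* (iv) *)
  (forall p w, P w = p -> [/\ Y1p p w = Y1 w, Y2p p w = Y2 w & A2p p w = A2 w]) ->
  (* (v) *)
  (forall p a p', condE Pr (Y2pa p a) [set w | P w = p'] =
                  condE Pr (Y2a a) [set w | P w = p']) ->
  let ATT := condE Pr (fun w => Y2a true w - Y2a false w) [set w | A2 w = true] in
  let psi := condE Pr (Y1p true) [set w | P w = true]
             - condE Pr (Y1p false) [set w | P w = true] in
  (condE Pr Y2 [set w | A2 w = true] - condE Pr Y1 [set w | A2 w = true])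
  - (condE Pr Y2 [set w | A2 w = false] - condE Pr Y1 [set w | A2 w = false])
  = ATT - psi.
Proof.
move=> mP mA iY1 iY2 iY1p iY2p iY2a iY2pa comp pos ii iii iv v ATT psi.
have AP : A2 = P.
  apply: funext => w; have [_ _ h] := iv (P w) w erefl; by rewrite -h ii.
subst A2; rewrite /ATT /psi.
rewrite !condEB //.
have comp' p : Y2pa p p = Y2p p by apply: funext => w; exact: comp.
rewrite -(v true true true) -(v false false true) !comp'.
rewrite (@condE_eqS _ _ _ _ (Y2p true) Y2); last by move=> w /= h; case: (iv _ _ h).
rewrite (@condE_eqS _ _ _ _ (Y1p true) Y1); last by move=> w /= h; case: (iv _ _ h).
have e3 := iii; rewrite !condEB // in e3.
rewrite (@condE_eqS _ _ _ _ Y2 (Y2p false) [set w | P w = false]); last by move=> w /= h; case: (iv _ _ h).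
rewrite (@condE_eqS _ _ _ _ Y1 (Y1p false) [set w | P w = false]); last by move=> w /= h; case: (iv _ _ h).
rewrite -e3.
set a := condE _ _ _; set b := condE _ _ _; set c := condE _ _ _; set e := condE _ _ _.
exact: arith4.
Qed.
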